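(* Let $p>3$ be a prime and for $1\le k\le p-1$ define $$G(p,k)=(-1)^{p+k}\frac{p\binom{2p-1}{p-1}\binom{4p+2k-2}{2p+k-1}\binom{2p-k-1}{p-1}\binom{2p+k-1}{2k}}{4^{5p-k-4}\binom{2k}{k}}.$$ Then $$G\Big(p,\frac{p+1}{2}\Big)\equiv(-1)^{(p-1)/2}3p\left(1-5pq_p(2)+15p^2q_p(2)^2\right)\pmod{p^4}.$$
   Context: $q_p(2)=(2^{p-1}-1)/p$ is the Fermat quotient. Congruences between rationals modulo $p^m$ mean the difference is $p^m$ times a rational with denominator prime to $p$. *)

(* Defs.v *)
From HB Require Import structures.
From mathcomp Require Import all_boot all_order all_algebra.
Set Implicit Arguments. Unset Strict Implicit. Unset Printing Implicit Defensive.
Import Order.TTheory GRing.Theory Num.Theory.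
Local Open Scope ring_scope.

Definition fermat_q2 (p : nat) : rat := ((2 ^ p.-1)%N%:R - 1) / p%:R.

Definition rat_congr (p m : nat) (x y : rat) : Prop :=
  exists r : rat, x - y = (p ^ m)%N%:R * r /\ coprime p `|denq r|%N.

Definition G (p k : nat) : rat :=
  (-1) ^+ (p + k) *
  ((p * 'C(2 * p - 1, p - 1) * 'C(4 * p + 2 * k - 2, 2 * p + k - 1)
      * 'C(2 * p - k - 1, p - 1) * 'C(2 * p + k - 1, 2 * k))%N%:R
   / ((4 ^ (5 * p - k - 4))%N%:R * ('C(2 * k, k))%:R)).

(* Main.v *)
Require Import Defs.
From HB Require Import structures.
From mathcomp Require Import all_boot all_order all_algebra.
From mathcomp Require Import zify ring lra.
Import Order.TTheory GRing.Theory Num.Theory.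
Set Implicit Arguments. Unset Strict Implicit. Unset Printing Implicit Defensive.
Local Open Scope ring_scope.

Definition pint (p : nat) (x : rat) := ~~ (p %| `|denq x|)%N.

Lemma pint_frac p (hp : prime p) (a b : int) :
  ~~ (p %| `|b|)%N -> pint p (a%:~R / b%:~R).
Proof.
move=> hb; rewrite /pint; set x := _ / _.
have b0 : b != 0 by apply: contraNneq hb => ->; rewrite dvdn0.
have e : numq x * b = a * denq x.
  apply: (@intr_inj rat); rewrite !rmorphM /= numqE /x.
  by field; rewrite intr_eq0.
have : (`|denq x| %| `|numq x| * `|b|)%N.
  by rewrite -abszM e abszM dvdn_mull.
rewrite Gauss_dvdr; last by have := coprime_num_den x; rewrite coprime_sym.
by move=> h; apply: contra hb => h2; apply: dvdn_trans h2 h.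
Qed.

Lemma pintP p x : pint p x ->
  exists a b : int, ~~ (p %| `|b|)%N /\ x = a%:~R / b%:~R.
Proof. by move=> h; exists (numq x), (denq x); rewrite divq_num_den. Qed.

Lemma pint_int p (hp : prime p) (a : int) : pint p a%:~R.
Proof.
rewrite -[a%:~R]divr1 -[1]/(1%:~R : rat); apply: pint_frac => //.
by rewrite /= dvdn1; apply: contraTN hp => /eqP ->.
Qed.

Lemma nz_of p (hp : prime p) (b : int) : ~~ (p %| `|b|)%N -> b != 0.
Proof. by apply: contraNneq => ->; rewrite dvdn0. Qed.

Lemma pintD p (hp : prime p) x y : pint p x -> pint p y -> pint p (x + y).
Proof.
move=> /pintP[a[b[hb ->]]] /pintP[c[d[hd ->]]].
have b0 := nz_of hp hb; have d0 := nz_of hp hd.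
have -> : a%:~R / b%:~R + c%:~R / d%:~R = (a * d + c * b)%:~R / (b * d)%:~R :> rat.
  by rewrite rmorphD !rmorphM /=; field; rewrite !intr_eq0 b0 d0.
by apply: pint_frac => //; rewrite abszM Euclid_dvdM // negb_or hb hd.
Qed.

Lemma pintM p (hp : prime p) x y : pint p x -> pint p y -> pint p (x * y).
Proof.
move=> /pintP[a[b[hb ->]]] /pintP[c[d[hd ->]]].
have b0 := nz_of hp hb; have d0 := nz_of hp hd.
have -> : a%:~R / b%:~R * (c%:~R / d%:~R) = (a * c)%:~R / (b * d)%:~R :> rat.
  by rewrite !rmorphM /=; field; rewrite !intr_eq0 b0 d0.
by apply: pint_frac => //; rewrite abszM Euclid_dvdM // negb_or hb hd.
Qed.

Lemma pintN p x : pint p x -> pint p (- x).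
Proof. by rewrite /pint denqN. Qed.

Lemma pintB p (hp : prime p) x y : pint p x -> pint p y -> pint p (x - y).
Proof. by move=> hx hy; apply: pintD => //; apply: pintN. Qed.

Lemma pint_nat p (hp : prime p) (n : nat) : pint p n%:R.
Proof. by rewrite -[n%:R]/((n%:Z)%:~R : rat); apply: pint_int. Qed.

Lemma pint1 p (hp : prime p) : pint p 1.
Proof. exact: (pint_nat hp 1). Qed.

Lemma pintV p (hp : prime p) x : ~~ (p %| `|numq x|)%N -> pint p x^-1.
Proof.
move=> h; have -> : x^-1 = (denq x)%:~R / (numq x)%:~R.
  by rewrite -{1}[x]divq_num_den invf_div.
exact: pint_frac.
Qed.

Lemma pint_sum p (hp : prime p) (I : Type) (r : seq I) (P : pred I) (F : I -> rat) :
  (forall i, P i -> pint p (F i)) -> pint p (\sum_(i <- r | P i) F i).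
Proof.
move=> h; apply: (big_ind (pint p)) => //; first exact: (pint_nat hp 0).
by move=> x y; apply: pintD.
Qed.

Lemma pint_prod p (hp : prime p) (I : Type) (r : seq I) (P : pred I) (F : I -> rat) :
  (forall i, P i -> pint p (F i)) -> pint p (\prod_(i <- r | P i) F i).
Proof.
move=> h; apply: (big_ind (pint p)) => //; first exact: pint1 hp.
by move=> x y; apply: pintM.
Qed.

Lemma pintV_nat p (hp : prime p) (j : nat) : ~~ (p %| j)%N -> pint p (j%:R)^-1.
Proof.
move=> h; apply: pintV => //.
by rewrite -[j%:R]/((j%:Z)%:~R : rat) numq_int.
Qed.

Lemma pintV_1p p (hp : prime p) x : pint p x -> pint p (1 + p%:R * x)^-1.
Proof.
move=> /pintP[a[b[hb ->]]]; have b0 := nz_of hp hb.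
have hc : ~~ (p %| `|(b + p%:Z * a)%R|)%N.
  apply: contra hb => h.
  have : (p%:Z %| b + p%:Z * a)%Z by [].
  by rewrite rpredDr //; exact: dvdz_mulr.
have c0 := nz_of hp hc.
have e : (b + p%:Z * a)%:~R = (b%:~R : rat) * (1 + p%:R * (a%:~R / b%:~R)).
  by rewrite rmorphD rmorphM /=; field; rewrite intr_eq0.
have y0 : (1 + p%:R * (a%:~R / b%:~R) : rat) != 0.
  by apply: contra_neq c0 => h; apply: (@intr_inj rat); rewrite e h mulr0.
have -> : (1 + p%:R * (a%:~R / b%:~R))^-1 = b%:~R / (b + p%:Z * a)%:~R :> rat.
  rewrite e; field; rewrite intr_eq0 b0 /=.
  by have := c0; rewrite -(intr_eq0 rat) rmorphD rmorphM.
exact: pint_frac.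
Qed.

Definition dv (p m : nat) (x : rat) := exists r, x = (p ^ m)%N%:R * r /\ pint p r.

Lemma dv_pint p (hp : prime p) m x : dv p m x -> pint p x.
Proof. by case=> r [-> hr]; apply: pintM => //; apply: pint_nat. Qed.

Lemma pint_dv p x : pint p x -> dv p 0 x.
Proof. by move=> h; exists x; rewrite expn0 mul1r. Qed.

Lemma dv0 p (hp : prime p) m : dv p m 0.
Proof. by exists 0; rewrite mulr0; split => //; apply: (pint_nat hp 0). Qed.

Lemma dvD p (hp : prime p) m x y : dv p m x -> dv p m y -> dv p m (x + y).
Proof.
case=> r [-> hr] [s [-> hs]]; exists (r + s); rewrite mulrDr; split => //.
exact: pintD.
Qed.

Lemma dvN p m x : dv p m x -> dv p m (- x).
Proof. by case=> r [-> hr]; exists (- r); rewrite mulrN; split => //; apply: pintN. Qed.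

Lemma dvB p (hp : prime p) m x y : dv p m x -> dv p m y -> dv p m (x - y).
Proof. by move=> hx hy; apply: dvD => //; apply: dvN. Qed.

Lemma dvM p (hp : prime p) m1 m2 x y : dv p m1 x -> dv p m2 y -> dv p (m1 + m2) (x * y).
Proof.
case=> r [-> hr] [s [-> hs]]; exists (r * s); split; last exact: pintM.
by rewrite expnD natrM; ring.
Qed.

Lemma dvMr p (hp : prime p) m x y : dv p m x -> pint p y -> dv p m (x * y).
Proof. by move=> hx hy; rewrite -[m]addn0; apply: dvM => //; apply: pint_dv. Qed.

Lemma dvMl p (hp : prime p) m x y : pint p x -> dv p m y -> dv p m (x * y).
Proof. by move=> hx hy; rewrite mulrC; apply: dvMr. Qed.

Lemma dv_le p (hp : prime p) m m' x : (m' <= m)%N -> dv p m x -> dv p m' x.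
Proof.
move=> le [r [-> hr]]; exists ((p ^ (m - m'))%N%:R * r); split.
  by rewrite mulrA -natrM -expnD subnKC.
by apply: pintM => //; apply: pint_nat.
Qed.

Lemma dv_p p (hp : prime p) : dv p 1 p%:R.
Proof. by exists 1; rewrite expn1 mulr1; split => //; exact: pint1 hp. Qed.

Lemma dv_sum p (hp : prime p) m (I : Type) (r : seq I) (P : pred I) (F : I -> rat) :
  (forall i, P i -> dv p m (F i)) -> dv p m (\sum_(i <- r | P i) F i).
Proof.
move=> h; apply: (big_ind (dv p m)) => //; first exact: dv0.
by move=> x y; apply: dvD.
Qed.

Lemma dv_cancel p (hp : prime p) m x u : u != 0 -> pint p u^-1 -> dv p m (x * u) -> dv p m x.
Proof.
move=> u0 hu h; have -> : x = x * u * u^-1 by rewrite -mulrA divff ?mulr1.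
exact: dvMr.
Qed.

Lemma dvX p (hp : prime p) m x k : dv p m x -> dv p (m * k) (x ^+ k).
Proof.
move=> h; elim: k => [|k IH]; first by rewrite muln0 expr0; apply: pint_dv; exact: pint1 hp.
by rewrite exprS mulnS; apply: dvM.
Qed.

Lemma prod1_dv p (hp : prime p) (x : nat -> rat) k :
  (forall i, dv p 1 (x i)) -> dv p 1 (\prod_(0 <= i < k) (1 + x i) - 1).
Proof.
move=> hx; elim: k => [|k IH]; first by rewrite big_geq // subrr; apply: dv0.
rewrite big_nat_recr //=.
have -> : (\prod_(0 <= i < k) (1 + x i)) * (1 + x k) - 1 =
  (\prod_(0 <= i < k) (1 + x i) - 1) * (1 + x k) + x k by ring.
apply: dvD => //; apply: dvMr => //.
by apply: pintD => //; [exact: pint1 hp | apply: dv_pint (hx k)].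
Qed.

Lemma prod_quad p (hp : prime p) (x w : nat -> rat) k :
  (forall i, dv p 1 (x i)) -> (forall i, dv p 2 (w i)) ->
  dv p 3 (\prod_(0 <= i < k) (1 + x i + w i) - \prod_(0 <= i < k) (1 + x i)
          - \sum_(0 <= i < k) w i).
Proof.
move=> hx hw; elim: k => [|k IH]; first by rewrite !big_geq // !subrr; apply: dv0.
rewrite !big_nat_recr //=.
set B := \prod_(0 <= i < k) (1 + x i + w i).
set A := \prod_(0 <= i < k) (1 + x i).
set W := \sum_(0 <= i < k) w i.
have hA : dv p 1 (A - 1) by apply: prod1_dv.
have hW : dv p 2 W by apply: dv_sum.
have -> : B * (1 + x k + w k) - A * (1 + x k) - (W + w k) =
  (B - A - W) * (1 + x k + w k) + ((A - 1) * w k + W * x k + W * w k) by ring.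
apply: dvD => //.
  apply: dvMr => //; apply: (pintD hp); last exact: dv_pint (hw k).
  by apply: (pintD hp); [exact: pint1 hp | apply: dv_pint (hx k)].
apply: dvD => //; first apply: dvD => //.
- by apply: (@dvM _ hp 1 2).
- by apply: (@dvM _ hp 2 1).
- by apply: (@dv_le _ hp 4) => //; apply: (@dvM _ hp 2 2).
Qed.

Lemma sumFp p (hp : prime p) (g : 'F_p -> 'F_p) :
  \sum_(x : 'F_p) g x = \sum_(0 <= i < p) g i%:R.
Proof.
rewrite (eq_bigr (fun x : 'F_p => g (nat_of_ord x)%:R)); last by move=> x _; rewrite natr_Zp.
rewrite -(big_mkord xpredT (fun i => g i%:R)).
have H : forall (k : nat) (h : nat -> 'F_p), k = p ->
  \sum_(0 <= i < k) h i = \sum_(0 <= i < p) h i by move=> k h ->.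
by apply: H; exact: Fp_cast.
Qed.

Lemma Fp_nat_eq0 p (hp : prime p) m : ((m%:R : 'F_p) == 0) = (p %| m)%N.
Proof.
apply/eqP/idP => h.
  by have := val_Fp_nat hp m; rewrite h /= => e; rewrite /dvdn -e.
by rewrite -(Fp_nat_mod hp); move/eqP: h => ->.
Qed.

Lemma Fp_small_nz p (hp : prime p) m : (0 < m < p)%N -> (m%:R : 'F_p) != 0.
Proof.
move=> /andP[m0 mp]; rewrite Fp_nat_eq0 //; apply/negP => /(dvdn_leq m0).
by rewrite leqNgt mp.
Qed.

Lemma sumFp_sq p (hp : prime p) (p3 : (3 < p)%N) : \sum_(x : 'F_p) x ^+ 2 = 0.
Proof.
have h2 : (2%:R : 'F_p) != 0 by apply: Fp_small_nz => //; apply/andP; split => //; lia.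
have h3 : (3%:R : 'F_p) != 0 by apply: Fp_small_nz => //; apply/andP; split => //; lia.
set S := \sum_(x : 'F_p) x ^+ 2.
have e : S = 4%:R * S.
  rewrite {1}/S (reindex_inj (mulfI h2)) /= mulr_sumr; apply: eq_bigr => x _.
  by rewrite exprMn -natrX.
have : 3%:R * S = 0.
  have -> : (3%:R : 'F_p) = 4%:R - 1 by ring.
  by rewrite mulrBl -e mul1r subrr.
by move/eqP; rewrite mulf_eq0 (negPf h3) => /eqP.
Qed.

Lemma sumFp_inv p (hp : prime p) (p3 : (3 < p)%N) : \sum_(x : 'F_p) (x^-1) ^+ 2 = 0.
Proof.
rewrite (reindex_inj (@invr_inj _)) /=.
rewrite (eq_bigr (fun x => x ^+ 2)) ?sumFp_sq // => x _; by rewrite invrK.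
Qed.

Lemma split_sum (R : zmodType) (F : nat -> R) n :
  \sum_(0 <= i < (2 * n).+1) F i = F 0%N + \sum_(0 <= i < n) (F i.+1 + F ((2 * n).+1 - i.+1)%N).
Proof.
rewrite big_ltn //; congr (_ + _).
rewrite (@big_cat_nat _ _ _ n.+1) //=; last by lia.
rewrite big_add1 /=.
have -> : \sum_(n.+1 <= i < (2 * n).+1) F i = \sum_(0 <= i < n) F (i + n.+1)%N.
  rewrite -{1}[n.+1]add0n big_addn.
  by have -> : ((2 * n).+1 - n.+1 = n)%N by lia.
rewrite [X in _ + X]big_nat_rev /= big_split /=; congr (_ + _).
apply: eq_big_nat => i /andP[_ hi]; congr F; lia.
Qed.

Lemma halfsum_Fp p (hp : prime p) n (hpn : p = (2 * n).+1) :
  \sum_(0 <= i < p) (((i%:R : 'F_p))^-1) ^+ 2 =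
  2%:R * \sum_(0 <= i < n) ((((i.+1)%:R : 'F_p))^-1) ^+ 2.
Proof.
have p0 : (p%:R : 'F_p) = 0 by apply/eqP; rewrite Fp_nat_eq0.
have H := split_sum (fun i => (((i%:R : 'F_p))^-1) ^+ 2) n.
rewrite -hpn /= in H; rewrite H invr0 expr0n /= add0r.
rewrite mulr_sumr; apply: eq_big_nat => i /andP[_ hi].
have e : (((p - i.+1)%N%:R : 'F_p) = - (i.+1)%:R).
  apply/eqP; rewrite -subr_eq0 opprK -natrD.
  have -> : (p - i.+1 + i.+1 = p)%N by rewrite hpn; lia.
  by rewrite p0.
by rewrite e invrN sqrrN mulr2n mulrDl mul1r.
Qed.

Lemma p_ndvd_fact p (hp : prime p) m : (m < p)%N -> ~~ (p %| m`!)%N.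
Proof.
elim: m => [|m IH] hm; first by rewrite fact0 dvdn1; apply: contraTN hp => /eqP ->.
rewrite factS Euclid_dvdM // negb_or IH ?andbT; last by lia.
by apply/negP => /(dvdn_leq (ltn0Sn m)); rewrite leqNgt hm.
Qed.

Lemma H2 p (hp : prime p) (p3 : (3 < p)%N) n (hpn : p = (2 * n).+1) :
  dv p 1 (\sum_(0 <= i < n) (((i.+1)%:R : rat)^-1) ^+ 2).
Proof.
have hF : \sum_(0 <= i < n) ((((i.+1)%:R : 'F_p))^-1) ^+ 2 = 0.
  have h2 : (2%:R : 'F_p) != 0 by apply: Fp_small_nz => //; apply/andP; split => //; lia.
  have := sumFp_inv hp p3; rewrite (sumFp hp (fun x => (x^-1) ^+ 2)) (halfsum_Fp hp hpn).
  by move/eqP; rewrite mulf_eq0 (negPf h2) => /eqP.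
set N := (\sum_(0 <= i < n) (n`! %/ i.+1) ^ 2)%N.
have hN : (p %| N)%N.
  rewrite -Fp_nat_eq0 // /N natr_sum.
  rewrite (eq_big_nat _ _ (F2 := fun i => (n`!%:R : 'F_p) ^+ 2 * (((i.+1)%:R)^-1) ^+ 2)).
    by rewrite -mulr_sumr hF mulr0.
  move=> i /andP[_ hi]; rewrite natrX natr_div ?exprMn //; first by apply: dvdn_fact; lia.
  by rewrite unitfE; apply: Fp_small_nz => //; lia.
have hfn : ~~ (p %| n`! ^ 2)%N by rewrite Euclid_dvdX // negb_and p_ndvd_fact //; lia.
have f0 : (n`! ^ 2)%:R != 0 :> rat by rewrite pnatr_eq0 expn_eq0 negb_and -lt0n fact_gt0.
exists ((N %/ p)%:R / (n`! ^ 2)%:R); split; last first.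
  by apply: pintM => //; [apply: pint_nat | apply: pintV_nat].
rewrite expn1 mulrA -natrM mulnC divnK //.
rewrite /N natr_sum mulr_suml; apply: eq_big_nat => i /andP[_ hi].
rewrite natrX natr_div; last 2 first.
- by apply: dvdn_fact; lia.
- by rewrite unitfE pnatr_eq0.
rewrite natrX; field.
by rewrite pnatr_eq0 -lt0n fact_gt0 /= addrC natr1 pnatr_eq0.
Qed.

Definition Fq (c : rat) (m : nat) : rat := \prod_(0 <= i < m) (1 + c / (i.+1)%:R).

Lemma pint_invS p (hp : prime p) i : (i.+1 < p)%N -> pint p ((i.+1)%:R)^-1.
Proof.
move=> h; apply: pintV_nat => //; apply/negP => /(dvdn_leq (ltn0Sn i)).
by rewrite leqNgt h.
Qed.

Lemma Fmul p (hp : prime p) (p3 : (3 < p)%N) n (hpn : p = (2 * n).+1) y z :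
  pint p y -> pint p z ->
  dv p 3 (Fq (y * p%:R) n * Fq (z * p%:R) n - Fq ((y + z) * p%:R) n).
Proof.
move=> hy hz; rewrite /Fq -big_split /=.
set x := fun i : nat => (y + z) * p%:R / (i.+1)%:R.
set w := fun i : nat => y * z * p%:R ^+ 2 * (((i.+1)%:R)^-1) ^+ 2.
have e1 : \prod_(0 <= i < n) ((1 + y * p%:R / (i.+1)%:R) * (1 + z * p%:R / (i.+1)%:R))
   = \prod_(0 <= i < n) (1 + x i + w i).
  by apply: eq_big_nat => i _; rewrite /x /w; ring.
have hinv : forall i, (i < n)%N -> pint p ((i.+1)%:R)^-1.
  by move=> i hi; apply: pint_invS => //; lia.
have := @prod_quad p hp (fun i => if (i < n)%N then x i else 0)
                        (fun i => if (i < n)%N then w i else 0) n.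
rewrite (eq_big_nat _ _ (F1 := fun i => 1 + (if (i < n)%N then x i else 0)
     + (if (i < n)%N then w i else 0)) (F2 := fun i => 1 + x i + w i)); last first.
  by move=> i /andP[_ ->].
rewrite (eq_big_nat _ _ (F1 := fun i => 1 + (if (i < n)%N then x i else 0))
     (F2 := fun i => 1 + x i)); last by move=> i /andP[_ ->].
rewrite (eq_big_nat _ _ (F1 := fun i => (if (i < n)%N then w i else 0))
     (F2 := fun i => w i)); last by move=> i /andP[_ ->].
move=> H; rewrite e1.
have hW : dv p 3 (\sum_(0 <= i < n) w i).
  rewrite /w -mulr_sumr; apply: (@dvM _ hp 2 1); last exact: H2.
  apply: (dvMl hp); first by apply: (pintM hp).
  by exists 1; rewrite mulr1 natrX; split => //; apply: pint1.
have -> : \prod_(0 <= i < n) (1 + x i + w i) - \prod_(0 <= i < n) (1 + (y + z) * p%:R / (i.+1)%:R)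
  = (\prod_(0 <= i < n) (1 + x i + w i) - \prod_(0 <= i < n) (1 + x i) - \sum_(0 <= i < n) w i)
    + \sum_(0 <= i < n) w i by rewrite /x; ring.
apply: dvD => //; apply: H => i.
  case: ifP => hi; last exact: dv0.
  exists ((y + z) / (i.+1)%:R); rewrite expn1 /x; split; first by ring.
  by apply: pintM => //; [apply: pintD | apply: hinv].
case: ifP => hi; last exact: dv0.
exists (y * z * (((i.+1)%:R)^-1) ^+ 2); rewrite /w natrX; split; first by ring.
by apply: (pintM hp); [apply: (pintM hp) | rewrite expr2; apply: (pintM hp); apply: hinv].
Qed.

Lemma Fq0 m : Fq 0 m = 1.
Proof. by rewrite /Fq big1 // => i _; rewrite mul0r addr0. Qed.

Lemma one_p_nz p (hp : prime p) r : pint p r -> 1 + p%:R * r != 0.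
Proof.
move=> hr; apply/negP => /eqP e.
have p0 : (p%:R : rat) != 0 by rewrite pnatr_eq0 -lt0n prime_gt0.
have er : r = - (p%:R)^-1.
  apply: (mulfI p0); rewrite mulrN divff //; apply/eqP; by rewrite -addr_eq0 addrC e.
move: hr; rewrite /pint er denqN.
rewrite -[p%:R]/((p%:Z)%:~R : rat) denqVz //=; first by rewrite dvdnn.
by rewrite -lt0n prime_gt0.
Qed.

Lemma Fq_factor p (hp : prime p) m y i : (i < m)%N -> (m < p)%N -> pint p y ->
  exists r, 1 + y * p%:R / (i.+1)%:R = 1 + p%:R * r /\ pint p r.
Proof.
move=> him hmp hy; exists (y / (i.+1)%:R); split; first by rewrite mulrAC mulrC mulrA.
by apply: pintM => //; apply: pint_invS => //; lia.
Qed.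

Lemma Fq_pint p (hp : prime p) m y : (m < p)%N -> pint p y -> pint p (Fq (y * p%:R) m).
Proof.
move=> hmp hy; rewrite /Fq big_seq; apply: pint_prod => // i; rewrite mem_iota add0n subn0 => /andP[_ him].
have [r [-> hr]] := Fq_factor hp him hmp hy.
by apply: pintD => //; [apply: pint1 | apply: pintM => //; apply: pint_nat].
Qed.

Lemma Fq_nz p (hp : prime p) m y : (m < p)%N -> pint p y -> Fq (y * p%:R) m != 0.
Proof.
move=> hmp hy; rewrite /Fq big_seq prodf_seq_neq0; apply/allP => i.
rewrite mem_iota add0n subn0 => /andP[_ him]; have [r [-> hr]] := Fq_factor hp him hmp hy.
by rewrite /= him /=; apply: one_p_nz.
Qed.

Lemma Fq_invpint p (hp : prime p) m y : (m < p)%N -> pint p y -> pint p (Fq (y * p%:R) m)^-1.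
Proof.
move=> hmp hy; rewrite /Fq -prodfV big_seq; apply: pint_prod => // i.
rewrite mem_iota add0n subn0 => /andP[_ him]; have [r [-> hr]] := Fq_factor hp him hmp hy.
exact: pintV_1p.
Qed.

Lemma Fq_split p n c (hpn : p = (2 * n).+1) :
  Fq c (2 * n) * Fq (- p%:R) n = Fq c n * Fq (- (c + p%:R)) n.
Proof.
rewrite /Fq (@big_cat_nat _ _ _ n) //=; last by lia.
have -> : \prod_(n <= i < 2 * n) (1 + c / (i.+1)%:R)
        = \prod_(0 <= i < n) (1 + c / ((n - i.+1 + n).+1)%:R).
  rewrite -{1}[n]add0n big_addn.
  have -> : (2 * n - n = n)%N by lia.
  by rewrite big_nat_rev /= add0n.
rewrite -mulrA -big_split /=; congr (_ * _); apply: eq_big_nat => i /andP[_ hi].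
have e : (p%:R : rat) = ((n - i.+1 + n).+1)%:R + (i.+1)%:R.
  by rewrite -natrD; congr (_%:R); lia.
rewrite e; field.
by rewrite -natrD !(addrC 1) !natr1 !pnatr_eq0.
Qed.

Lemma nS0 (k : nat) : (1 + k%:R : rat) != 0.
Proof. by rewrite addrC natr1 pnatr_eq0. Qed.

Lemma prodAB n : (\prod_(0 <= i < n) (n.+1 + i) = 2 ^ n * \prod_(0 <= i < n) (2 * i).+1)%N.
Proof.
elim: n => [|n IH]; first by rewrite !big_geq.
apply/eqP; rewrite -(eqn_pmul2l (ltn0Sn n)); apply/eqP.
have -> : (n.+1 * \prod_(0 <= i < n.+1) (n.+2 + i) = \prod_(0 <= i < n.+2) (n.+1 + i))%N.
  by rewrite [RHS]big_nat_recl // addn0; congr (_ * _)%N; apply: eq_big_nat => i _; rewrite addnS addSn.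
rewrite !big_nat_recr //= IH expnS.
have -> : (n.+1 + n.+1 = 2 * n.+1)%N by lia.
have -> : (n.+1 + n = (2 * n).+1)%N by lia.
lia.
Qed.

Lemma Fq_negp p n (hpn : p = (2 * n).+1) :
  Fq (- p%:R) n = (-1) ^+ n * (\prod_(0 <= i < n) ((n.+1 + i)%N%:R)) / \prod_(0 <= i < n) ((i.+1)%:R).
Proof.
have -> : \prod_(0 <= i < n) ((n.+1 + i)%N%:R) = \prod_(0 <= i < n) ((p - i.+1)%N%:R) :> rat.
  rewrite [RHS]big_nat_rev /=; apply: eq_big_nat => i /andP[_ hi]; congr (_%:R); lia.
have -> : (-1) ^+ n = \prod_(0 <= i < n) (-1 : rat) by rewrite prodr_const_nat subn0.
rewrite -big_split -prodf_div /=; apply: eq_big_nat => i /andP[_ hi].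
rewrite natrB; last by lia.
by field; apply: nS0.
Qed.

Lemma Fq_neghalfp p n (hpn : p = (2 * n).+1) :
  Fq (- (p%:R / 2%:R)) n = (-1) ^+ n * (\prod_(0 <= i < n) (((2 * i).+1)%N%:R)) / \prod_(0 <= i < n) ((2 * i.+1)%N%:R).
Proof.
have -> : \prod_(0 <= i < n) (((2 * i).+1)%N%:R) = \prod_(0 <= i < n) ((p - 2 * i.+1)%N%:R) :> rat.
  rewrite [RHS]big_nat_rev /=; apply: eq_big_nat => i /andP[_ hi]; congr (_%:R); lia.
have -> : (-1) ^+ n = \prod_(0 <= i < n) (-1 : rat) by rewrite prodr_const_nat subn0.
rewrite -big_split -prodf_div /=; apply: eq_big_nat => i /andP[_ hi].
rewrite natrB; last by lia.
by rewrite natrM; field; apply: nS0.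
Qed.

Lemma Fq_exact p n (hpn : p = (2 * n).+1) :
  Fq (- p%:R) n = (2 ^ (p - 1))%N%:R * Fq (- (p%:R / 2%:R)) n.
Proof.
rewrite (Fq_negp hpn) (Fq_neghalfp hpn).
have -> : \prod_(0 <= i < n) ((n.+1 + i)%N%:R) = (2 ^ n * \prod_(0 <= i < n) (2 * i).+1)%N%:R :> rat.
  by rewrite -prodAB natr_prod.
have -> : \prod_(0 <= i < n) ((2 * i.+1)%N%:R) = (2 ^ n)%N%:R * \prod_(0 <= i < n) ((i.+1)%:R) :> rat.
  have -> : (2 ^ n)%N%:R = \prod_(0 <= i < n) (2%:R : rat) by rewrite prodr_const_nat subn0 natrX.
  by rewrite -big_split; apply: eq_big_nat => i _; rewrite natrM.
have -> : (p - 1 = 2 * n)%N by lia.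
have h0 : \prod_(0 <= i < n) ((i.+1)%:R : rat) != 0.
  by rewrite big_seq prodf_seq_neq0; apply/allP => i _; rewrite /= pnatr_eq0 implybT.
rewrite natrM natr_prod !natrX (_ : (2 * n = n + n)%N); last by lia.
rewrite exprD; field.
by rewrite h0 /= expf_neq0 // pnatr_eq0.
Qed.

Lemma fermat2 p (hp : prime p) (p3 : (3 < p)%N) : (p %| 2 ^ (p - 1) - 1)%N.
Proof.
have h := fermat_little 2 hp.
have h1 : (1 <= 2 ^ (p - 1))%N by rewrite expn_gt0.
have e : (2 ^ p = 2 * 2 ^ (p - 1))%N by rewrite -expnS; congr (_ ^ _)%N; lia.
have : (p %| 2 ^ p - 2)%N by rewrite -eqn_mod_dvd ?h // e; lia.
rewrite e.
have -> : (2 * 2 ^ (p - 1) - 2 = 2 * (2 ^ (p - 1) - 1))%N by rewrite mulnBr muln1.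
rewrite Gauss_dvdr //.
by rewrite prime_coprime //; apply/negP => /(dvdn_leq (isT : (0 < 2)%N)); lia.
Qed.

Lemma dv_t p (hp : prime p) (p3 : (3 < p)%N) : dv p 1 ((2 ^ (p - 1))%N%:R - 1).
Proof.
have [k hk] := dvdnP (fermat2 hp p3).
exists k%:R; rewrite expn1; split; last exact: pint_nat.
have h1 : (1 <= 2 ^ (p - 1))%N by rewrite expn_gt0.
by rewrite -natrM mulnC -hk natrB.
Qed.

Lemma FqE c c' m : c = c' -> Fq c m = Fq c' m.
Proof. by move->. Qed.

Lemma core p (hp : prime p) (p3 : (3 < p)%N) n (hpn : p = (2 * n).+1) :
  dv p 3 (Fq (1 * p%:R) (2 * n) * Fq (2%:R * p%:R) (2 * n) * Fq (3%:R * p%:R) (2 * n)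
          * Fq (4%:R * p%:R) (2 * n) / (Fq (2%:R * p%:R) n * ((2 ^ (p - 1))%N%:R) ^+ 9)
          - (1 - 5%:R * ((2 ^ (p - 1))%N%:R - 1) + 15%:R * ((2 ^ (p - 1))%N%:R - 1) ^+ 2)).
Proof.
set T : rat := (2 ^ (p - 1))%N%:R.
set t := T - 1.
have ht : dv p 1 t := dv_t hp p3.
have hnp : (n < p)%N by lia.
set F := fun y : rat => Fq (y * p%:R) n.
have Fpint : forall y, pint p y -> pint p (F y) by move=> y hy; apply: Fq_pint.
have Fnz : forall y, pint p y -> F y != 0 by move=> y hy; apply: Fq_nz.
have Finv : forall y, pint p y -> pint p (F y)^-1 by move=> y hy; apply: Fq_invpint.
have Fm : forall y z, pint p y -> pint p z -> dv p 3 (F y * F z - F (y + z)).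
  by move=> y z hy hz; apply: (Fmul hp p3 hpn).
have pn : forall k : nat, pint p k%:R by move=> k; apply: pint_nat.
have pnN : forall k : nat, pint p (- k%:R) by move=> k; apply: pintN.
have F1 : F (-1) = Fq (- p%:R) n by apply: FqE; ring.
have pm1 : pint p (-1) by apply: pintN; apply: pint1.
have Fm1nz : F (-1) != 0 by apply: Fnz.
have Fm1inv : pint p (F (-1))^-1 by apply: Finv.
have hP : forall a : nat, dv p 3 (Fq (a%:R * p%:R) (2 * n) - 1).
  move=> a; apply: (dv_cancel hp (u := F (-1))); [exact: Fm1nz | exact: Fm1inv |].
  have e := Fq_split (a%:R * p%:R) hpn.
  have -> : (Fq (a%:R * p%:R) (2 * n) - 1) * F (-1)
           = F a%:R * F (- (a.+1)%:R) - F (a%:R + - (a.+1)%:R).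
    rewrite F1 mulrBl e mul1r /F; congr (_ * _ - _).
      by apply: FqE; rewrite -natr1; ring.
    by apply: FqE; rewrite -natr1; ring.
  exact: Fm.
have hhalf : pint p (- (2%:R^-1)).
  apply: pintN; apply: pintV_nat => //; apply/negP => /(dvdn_leq (isT : (0 < 2)%N)); lia.
have hT : dv p 3 (F (-1) - T ^+ 2).
  have ex : F (-1) = T * F (- (2%:R^-1)).
    rewrite F1 /T (Fq_exact hpn) /F; congr (_ * _); apply: FqE; ring.
  apply: (dv_cancel hp (u := F (-1))); [exact: Fm1nz | exact: Fm1inv |].
  have -> : (F (-1) - T ^+ 2) * F (-1)
    = T ^+ 2 * (F (- (2%:R^-1)) * F (- (2%:R^-1)) - F (- (2%:R^-1) + - (2%:R^-1))).
    have -> : - (2%:R^-1) + - (2%:R^-1) = -1 :> rat by field.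
    by rewrite ex; ring.
  apply: (dvMl hp); first by rewrite /T -natrX; apply: pn.
  exact: Fm.
have hQ : dv p 3 (F 2%:R * T ^+ 4 - 1).
  have -> : F 2%:R * T ^+ 4 - 1
    = - F 2%:R * ((F (-1) - T ^+ 2) * (F (-1) + T ^+ 2))
      + (F 2%:R * F (-1) - F (2%:R + -1)) * F (-1)
      + (F 1 * F (-1) - F (1 + -1)).
    have -> : (2%:R + -1 : rat) = 1 by ring.
    have -> : (1 + -1 : rat) = 0 by ring.
    rewrite /F mul0r Fq0; ring.
  have pF2 := Fpint _ (pn 2).
  have pFm1 : pint p (F (-1)) by apply: Fpint; apply: (pnN 1).
  have pT : pint p T by apply: pn.
  apply: dvD => //; first apply: dvD => //.
  - apply: (dvMl hp); first by apply: pintN.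
    apply: (dvMr hp) => //; apply: (pintD hp) => //; rewrite expr2; exact: pintM.
  - by apply: dvMr => //; apply: Fm => //; apply: (pnN 1).
  - by apply: Fm => //; apply: pint1.
set P1 := Fq (1 * p%:R) (2 * n).
set P2 := Fq (2%:R * p%:R) (2 * n).
set P3 := Fq (3%:R * p%:R) (2 * n).
set P4 := Fq (4%:R * p%:R) (2 * n).
have hP1 : dv p 3 (P1 - 1) by exact: (hP 1%N).
have hP2 := hP 2%N. have hP3 := hP 3%N. have hP4 := hP 4%N.
have pP : forall a : nat, pint p (Fq (a%:R * p%:R) (2 * n)) by move=> a; apply: Fq_pint => //; lia.
have pP1 : pint p P1 by exact: (pP 1%N).
set D := F 2%:R * T ^+ 9.
have Dnz : D != 0.
  rewrite /D mulf_neq0 ?expf_neq0 ?Fnz ?pnatr_eq0 // expn_eq0 //.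
have Dinv : pint p D^-1.
  rewrite /D invfM; apply: pintM => //; first exact: Finv.
  rewrite -natrX; apply: pintV_nat => //; rewrite !Euclid_dvdX //.
  by apply/negP => /andP[/andP[h _] _]; move: (dvdn_leq (isT : (0 < 2)%N) h); lia.
apply: (dv_cancel hp (u := D)) => //.
rewrite -/t.
have -> : (P1 * P2 * P3 * P4 / D - (1 - 5%:R * t + 15%:R * t ^+ 2)) * D
  = ((P1 - 1) * P2 * P3 * P4 + (P2 - 1) * P3 * P4 + (P3 - 1) * P4 + (P4 - 1))
    - (1 - 5%:R * t + 15%:R * t ^+ 2) * T ^+ 5 * (F 2%:R * T ^+ 4 - 1)
    - t ^+ 3 * (35%:R + 105%:R * t + 126%:R * t ^+ 2 + 70%:R * t ^+ 3 + 15%:R * t ^+ 4).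
  rewrite /D /t; field; apply/andP; split; [by rewrite pnatr_eq0 expn_eq0 | exact: (Fnz _ (pn 2))].
have pt : pint p t by apply: dv_pint ht.
have pY : pint p (1 - 5%:R * t + 15%:R * t ^+ 2).
  apply: (pintD hp); first apply: (pintB hp); first exact: pint1 hp.
  - exact: (pintM hp).
  - by apply: (pintM hp) => //; rewrite expr2; apply: (pintM hp).
have pTk : forall k, pint p (T ^+ k).
  by move=> k; rewrite -natrX; apply: pn.
have pP2 : pint p P2 by exact: (pP 2%N).
have pP3 : pint p P3 by exact: (pP 3%N).
have pP4 : pint p P4 by exact: (pP 4%N).
have X1 : dv p 3 ((P1 - 1) * P2 * P3 * P4).
  by apply: (dvMr hp) => //; apply: (dvMr hp) => //; apply: (dvMr hp).
have X2 : dv p 3 ((P2 - 1) * P3 * P4).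
  by apply: (dvMr hp) => //; apply: (dvMr hp) => //; exact: hP2.
have X3 : dv p 3 ((P3 - 1) * P4) by apply: (dvMr hp) => //; exact: hP3.
have X4 : dv p 3 (P4 - 1) by exact: hP4.
have X5 : dv p 3 ((1 - 5%:R * t + 15%:R * t ^+ 2) * T ^+ 5 * (F 2%:R * T ^+ 4 - 1)).
  by apply: (dvMl hp) => //; apply: (pintM hp).
have X6 : dv p 3 (t ^+ 3 * (35%:R + 105%:R * t + 126%:R * t ^+ 2 + 70%:R * t ^+ 3 + 15%:R * t ^+ 4)).
  apply: (dvMr hp); first exact: (@dvX _ hp 1 t 3).
  have ptk : forall k, pint p (t ^+ k).
    move=> k; elim: k => [|k IH]; first by rewrite expr0; apply: pint1.
    by rewrite exprS; apply: (pintM hp).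
  by do 4 (apply: (pintD hp); last by apply: (pintM hp)); apply: pn.
apply: (dvB hp) => //; apply: (dvB hp) => //.
by do 3 (apply: (dvD hp) => //).
Qed.

Lemma factF c m : ((c + m)`!)%:R = (c`!)%:R * (m`!)%:R * Fq (c%:R) m :> rat.
Proof.
elim: m => [|m IH]; first by rewrite addn0 fact0 /Fq big_geq // !mulr1.
rewrite addnS factS natrM IH factS natrM /Fq big_nat_recr //= -/(Fq _ _).
rewrite /Fq; set Q := \prod_(0 <= i < m) _.
rewrite -addnS natrD; field.
by rewrite addrC natr1 pnatr_eq0.
Qed.

Lemma binR a b : (b <= a)%N ->
  ('C(a, b))%:R = (a`!)%:R / ((b`!)%:R * ((a - b)`!)%:R) :> rat.
Proof.
move=> h; rewrite -(bin_fact h) !natrM mulfK //.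
by rewrite mulf_neq0 // pnatr_eq0 -lt0n fact_gt0.
Qed.

Lemma Gform p (hp : prime p) (p3 : (3 < p)%N) n (hpn : p = (2 * n).+1) :
  G p ((p + 1) %/ 2) = (-1) ^+ n * (3%:R * p%:R) *
   (Fq (1 * p%:R) (2 * n) * Fq (2%:R * p%:R) (2 * n) * Fq (3%:R * p%:R) (2 * n)
          * Fq (4%:R * p%:R) (2 * n) / (Fq (2%:R * p%:R) n * ((2 ^ (p - 1))%N%:R) ^+ 9)).
Proof.
have hk : ((p + 1) %/ 2 = n.+1)%N by rewrite hpn; lia.
rewrite /G hk.
have -> : (4 * p + 2 * n.+1 - 2 = 4 * p + 2 * n)%N by lia.
have -> : (2 * p + n.+1 - 1 = 2 * p + n)%N by lia.
have -> : (2 * p - n.+1 - 1 = p + n - 1)%N by lia.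
have -> : (5 * p - n.+1 - 4 = 9 * n)%N by lia.
have -> : (p + n.+1 = (n + 1) * 2 + n)%N by lia.
rewrite exprD exprM sqrr_sign mul1r.
rewrite !natrM !binR; try lia.
have hm : (p - 1 = 2 * n)%N by lia.
rewrite (_ : (2 * p - 1 - (p - 1) = p)%N); last lia.
rewrite (_ : (4 * p + 2 * n - (2 * p + n) = 2 * p + n)%N); last lia.
rewrite (_ : (p + n - 1 - (p - 1) = n)%N); last lia.
rewrite (_ : (2 * p + n - 2 * n.+1 = p + n - 1)%N); last lia.
rewrite (_ : (2 * n.+1 - n.+1 = n.+1)%N); last lia.
rewrite (_ : (2 * n.+1 = p.+1)%N); last lia.
set P := ((p - 1)`!)%:R : rat.
set N := (n`!)%:R : rat.
set X := ((p + n - 1)`!)%:R : rat.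
have fp : (p`!)%:R = p%:R * P :> rat.
  have e : p = (p - 1).+1 by lia.
  by rewrite /P {1}e factS natrM -e.
have f2p1 : ((2 * p - 1)`!)%:R = p`!%:R * P * Fq p%:R (2 * n) :> rat.
  by rewrite -hm /P -factF; congr (_`!%:R); lia.
have f2p : ((2 * p)`!)%:R = (2 * p)%N%:R * ((2 * p - 1)`!)%:R :> rat.
  have e : (2 * p = (2 * p - 1).+1)%N by lia.
  by rewrite {1}e factS natrM -e.
have f2pn : ((2 * p + n)`!)%:R = ((2 * p)`!)%:R * N * Fq (2%:R * p%:R) n :> rat.
  by rewrite factF natrM.
have f3p1 : ((3 * p - 1)`!)%:R = ((2 * p)`!)%:R * P * Fq (2%:R * p%:R) (2 * n) :> rat.
  by rewrite -hm -natrM /P -factF; congr (_`!%:R); lia.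
have f3p : ((3 * p)`!)%:R = (3 * p)%N%:R * ((3 * p - 1)`!)%:R :> rat.
  have e : (3 * p = (3 * p - 1).+1)%N by lia.
  by rewrite {1}e factS natrM -e.
have f4p1 : ((4 * p - 1)`!)%:R = ((3 * p)`!)%:R * P * Fq (3%:R * p%:R) (2 * n) :> rat.
  by rewrite -hm -natrM /P -factF; congr (_`!%:R); lia.
have f4p : ((4 * p)`!)%:R = (4 * p)%N%:R * ((4 * p - 1)`!)%:R :> rat.
  have e : (4 * p = (4 * p - 1).+1)%N by lia.
  by rewrite {1}e factS natrM -e.
have f4p2n : ((4 * p + 2 * n)`!)%:R = ((4 * p)`!)%:R * P * Fq (4%:R * p%:R) (2 * n) :> rat.
  by rewrite -hm -natrM /P -factF; congr (_`!%:R); lia.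
have fp1 : ((p.+1)`!)%:R = (p.+1)%:R * p`!%:R :> rat by rewrite factS natrM.
have fn1 : ((n.+1)`!)%:R = (n.+1)%:R * N :> rat by rewrite factS natrM.
have f4 : (4 ^ (9 * n))%N%:R = ((2 ^ (p - 1))%N%:R) ^+ 9 :> rat.
  rewrite -natrX; congr (_%:R); rewrite hm -expnM (_ : 4 = 2 ^ 2)%N // -expnM; congr (_ ^ _)%N; lia.
rewrite f4p2n f4p f4p1 f3p f3p1 f2pn f2p f2p1 fp1 fn1 fp f4.
have hn1 : (n.+1)%:R = (p.+1)%:R / 2%:R :> rat.
  by rewrite (_ : p.+1 = 2 * n.+1)%N; [rewrite natrM; field | lia].
rewrite hn1 !natrM.
have hpp : pint p (1 : rat) by apply: pint1.
have nzP : P != 0 by rewrite pnatr_eq0 -lt0n fact_gt0.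
have nzN : N != 0 by rewrite pnatr_eq0 -lt0n fact_gt0.
have nzX : X != 0 by rewrite pnatr_eq0 -lt0n fact_gt0.
have nzp : (p%:R : rat) != 0 by rewrite pnatr_eq0 -lt0n prime_gt0.
have nzp1 : ((p.+1)%:R : rat) != 0 by rewrite pnatr_eq0.
have nzT : ((2 ^ (p - 1))%N%:R : rat) != 0 by rewrite pnatr_eq0 expn_eq0.
have nzF1 : Fq p%:R (2 * n) != 0.
  by have := @Fq_nz p hp (2 * n) 1; rewrite mul1r; apply; [lia | apply: pint1].
have nzF2 : Fq (2%:R * p%:R) n != 0.
  by apply: (Fq_nz hp); [lia | apply: pint_nat].
field.
by rewrite -/P -/N -/X nzT nzF2 nzN nS0 nzP nzp nzX nzF1.
Qed.
Theorem lemma3p3 (p : nat) (hp : prime p) (hp3 : (3 < p)%N) :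
  rat_congr p 4 (G p ((p + 1) %/ 2))
    ((-1) ^+ ((p - 1) %/ 2) * (3 * p%:R) *
      (1 - 5 * p%:R * fermat_q2 p + 15 * p%:R ^+ 2 * fermat_q2 p ^+ 2)).
Proof.
have [n hpn] : exists n, p = (2 * n).+1.
  case: (even_prime hp) => [e|hodd]; first by lia.
  exists p./2; have := odd_double_half p; rewrite hodd -addnn; lia.
have hd : ((p - 1) %/ 2 = n)%N by rewrite hpn; lia.
rewrite (Gform hp hp3 hpn) hd.
set T : rat := (2 ^ (p - 1))%N%:R.
have nzp : (p%:R : rat) != 0 by rewrite pnatr_eq0 -lt0n prime_gt0.
have hq : p%:R * fermat_q2 p = T - 1.
  by rewrite /fermat_q2 /T -subn1; field.
have -> : (1 - 5 * p%:R * fermat_q2 p + 15 * p%:R ^+ 2 * fermat_q2 p ^+ 2)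
   = (1 - 5%:R * (T - 1) + 15%:R * (T - 1) ^+ 2).
  by rewrite -hq; ring.
have h := core hp hp3 hpn.
have : dv p 4 ((-1) ^+ n * 3%:R * (p%:R * (
   Fq (1 * p%:R) (2 * n) * Fq (2%:R * p%:R) (2 * n) * Fq (3%:R * p%:R) (2 * n)
          * Fq (4%:R * p%:R) (2 * n) / (Fq (2%:R * p%:R) n * T ^+ 9)
          - (1 - 5%:R * (T - 1) + 15%:R * (T - 1) ^+ 2)))).
  apply: (dvMl hp).
    apply: (pintM hp); last exact: pint_nat.
    by rewrite -signr_odd; case: (odd n); [apply: pintN; apply: pint1 | apply: pint1].
  by apply: (@dvM _ hp 1 3) => //; apply: dv_p.
case=> r [e hr]; exists r; split; last by rewrite prime_coprime.
by rewrite -e; ring.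
Qed.
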